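(* Fix real numbers $r_1,\dots,r_m\in[0,1]$. Then the set $W(r_1,\dots,r_m)=\{\mathbf{x}\in\mathcal{C}_n:\mathbf{x}_T^{(j)}=r_j\text{ for all }j\in[m]\}$ contains at most $2^{n(m+1)}$ Generalized Nash equilibria of $G^{(2)}$.
   Context: $G^{(2)}$ is a Fragile multi-CPR Game with $n\ge1$ players and $m\ge1$ CPRs: $[k]=\{1,\dots,k\}$, $C_m=\{(x_1,\dots,x_m)\in[0,1]^m:\sum_j x_j\le1\}$, $\mathcal{C}_n=\prod_{i\in[n]}C_m$, $\mathcal{C}_{-i}=\prod_{[n]\setminus\{i\}}C_m$. A profile is $\mathbf{x}=(\mathbf{x}_1,\dots,\mathbf{x}_n)$, $\mathbf{x}_i=(x_{i1},\dots,x_{im})$; write $\mathbf{x}=(\mathbf{x}_i,\mathbf{x}_{-i})$; $\mathbf{x}_T^{(j)}=\sum_i x_{ij}$, $\mathbf{x}_T^{j|i}=\sum_{\ell\ne i}x_{\ell j}$. Each CPR $j$ has return rate $\mathcal{R}_j(t)>1$ and failure probability $p_j(t)\in[0,1]$; each player $i$ has parameters $a_i,k_i$. $\mathcal{F}_{ij}(t)=(\mathcal{R}_j(t)-1)^{a_i}(1-p_j(t))-k_ip_j(t)$; utility $\mathcal{V}_i(\mathbf{x}_i;\mathbf{x}_{-i})=\sum_j x_{ij}^{a_i}\mathcal{F}_{ij}(\mathbf{x}_T^{(j)})$. Assumption: (1) $p_j(0)=0$, $p_j(t)=1$ for $t\ge1$; (2) $a_i\in(0,1]$, $k_i>0$;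 (3) each $\mathcal{F}_{ij}$ (continuous on $[0,1]$) has strictly negative first and second derivatives on $(0,1)$. $\omega_{ij}\in(0,1)$ is the unique zero of $\mathcal{F}_{ij}$ in $(0,1)$. $A(\mathbf{x}_{-i})=\{j:\mathbf{x}_T^{j|i}<\omega_{ij}\}$. $\vartheta_i(\mathbf{x}_{-i})=C_m\cap\big(\prod_{j\in A(\mathbf{x}_{-i})}[0,\omega_{ij}-\mathbf{x}_T^{j|i}]\times\prod_{j\notin A(\mathbf{x}_{-i})}\{0\}\big)$. A Generalized Nash equilibrium is $\mathbf{x}\in\mathcal{C}_n$ with, for all $i$, $\mathbf{x}_i\in\vartheta_i(\mathbf{x}_{-i})$ and $\mathcal{V}_i(\mathbf{x}_i;\mathbf{x}_{-i})\ge\mathcal{V}_i(\mathbf{z};\mathbf{x}_{-i})$ for all $\mathbf{z}\in\vartheta_i(\mathbf{x}_{-i})$. *)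

(* Defs.v *)
From HB Require Import structures.
From mathcomp Require Import all_boot all_order all_algebra.
From mathcomp Require Import all_classical all_reals all_analysis.
Set Implicit Arguments. Unset Strict Implicit. Unset Printing Implicit Defensive.
Import Order.TTheory GRing.Theory Num.Theory.
Local Open Scope ring_scope.

Section Game.
Variable R : realType.
Variables n m : nat.

(* A single player's strategy: a vector of investments in the m CPRs, in C_m. *)
Definition in_Cm (z : 'I_m -> R) : Prop :=
  (forall j, 0 <= z j <= 1) /\ \sum_(j < m) z j <= 1.

(* A profile x : player i, CPR j |-> x_{ij};  x \in \mathcal{C}_n. *)
Definition in_Cn (x : 'M[R]_(n, m)) : Prop := forall i, in_Cm (fun j => x i j).

Definition xT (x : 'M[R]_(n, m)) (j : 'I_m) : R := \sum_(i < n) x i j.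
Definition xTm (x : 'M[R]_(n, m)) (i : 'I_n) (j : 'I_m) : R :=
  \sum_(l < n | l != i) x l j.

Definition Ffun (a k : R) (Rj pj : R -> R) (t : R) : R :=
  powR (Rj t - 1) a * (1 - pj t) - k * pj t.

Variables (a k : 'I_n -> R) (Rr p : 'I_m -> R -> R) (omega : 'I_n -> 'I_m -> R).

Definition Vutil (i : 'I_n) (z : 'I_m -> R) (x : 'M[R]_(n, m)) : R :=
  \sum_(j < m) powR (z j) (a i) * Ffun (a i) (k i) (Rr j) (p j) (z j + xTm x i j).

Definition in_theta (i : 'I_n) (x : 'M[R]_(n, m)) (z : 'I_m -> R) : Prop :=
  in_Cm z /\
  forall j, (xTm x i j < omega i j -> 0 <= z j <= omega i j - xTm x i j) /\
            (~ (xTm x i j < omega i j) -> z j = 0).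

Definition GNE (x : 'M[R]_(n, m)) : Prop :=
  in_Cn x /\
  forall i, in_theta i x (fun j => x i j) /\
    forall z, in_theta i x z -> Vutil i z x <= Vutil i (fun j => x i j) x.

End Game.

(* Main.v *)
Require Import Defs.
From HB Require Import structures.
From mathcomp Require Import all_boot all_order all_algebra.
From mathcomp Require Import all_classical all_reals all_analysis.
From mathcomp Require Import ring lra.
Import Order.TTheory GRing.Theory Num.Theory numFieldNormedType.Exports.
Local Open Scope ring_scope.

Lemma ex_eps2 (R : realType) (u v : R) : 0 < u -> 0 < v -> exists2 e : R, 0 < e & e <= u /\ e <= v.
Proof.
move=> u0 v0; exists (Num.min u v); first by rewrite lt_min u0 v0.
by rewrite !ge_min !lexx /= orbT.
Qed.

Lemma inner_der (R : realType) (x d t : R) : is_derive t 1 (fun s : R => x + s * d) d.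
Proof.
have h1 : is_derive t 1 (cst x) 0 by exact: is_derive_cst.
have h2 : is_derive t 1 (d *: (@id R)) (d *: 1) by apply: is_deriveZ; exact: is_derive_id.
have := is_deriveD h1 h2.
have -> : (cst x + d *: id)%R = (fun s : R => x + s * d).
  by apply/funext => s /=; rewrite mulrC.
by rewrite add0r /GRing.scale /= mulr1.
Qed.

Lemma outer_der (R : realType) (F : R -> R) (al c y dF : R) : 0 < y ->
  is_derive (y + c) 1 F dF ->
  is_derive y 1 (fun s : R => powR s al * F (s + c)) (powR y al * dF + F (y + c) * (al * powR y (al - 1))).
Proof.
move=> y0 hF.
have hs := @is_derive_shift R y 1 c.
have hc := @is_derive1_comp R F (shift c) y dF 1 hF hs.
have hp := is_derive1_powR al y0.
have := is_deriveM hp hc.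
have -> : (((fun s : R => powR s al) : R -> R) * (F \o shift c))%R = (fun s : R => powR s al * F (s + c)) by apply/funext.
by rewrite mulr1 /GRing.scale /=.
Qed.

Section Main.
Variables (R : realType) (n m : nat) (a k : 'I_n -> R) (Rr p : 'I_m -> R -> R) (omega : 'I_n -> 'I_m -> R).
Hypothesis ha : forall i, 0 < a i <= 1.
Hypothesis hFc : forall i j, {within `[0, 1], continuous (Ffun (a i) (k i) (Rr j) (p j))}%classic.
Hypothesis hFd : forall i j (t : R), 0 < t < 1 ->
     derivable (Ffun (a i) (k i) (Rr j) (p j)) t 1 /\
     derive1 (Ffun (a i) (k i) (Rr j) (p j)) t < 0 /\
     derivable (derive1 (Ffun (a i) (k i) (Rr j) (p j))) t 1 /\
     derive1 (derive1 (Ffun (a i) (k i) (Rr j) (p j))) t < 0.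
Hypothesis homega : forall i j, 0 < omega i j < 1 /\
     Ffun (a i) (k i) (Rr j) (p j) (omega i j) = 0.
Variable r : 'I_m -> R.

Local Notation F i j := (Ffun (a i) (k i) (Rr j) (p j)).

Definition gg i j (y : R) := a i * powR y (a i - 1) * F i j (r j) + powR y (a i) * derive1 (F i j) (r j).

Lemma F_decr i j : {in `[0, 1]%R &, {homo F i j : x y /~ x < y}}.
Proof.
apply: ltr0_derive1_lt_cc; last exact: hFc.
- by move=> t; rewrite in_itv /= => /(hFd i j) [].
- by move=> t; rewrite in_itv /= => /(hFd i j) [_ []].
Qed.

Lemma F_pos i j t : 0 <= t < omega i j -> 0 < F i j t.
Proof.
case/andP=> t0 tw; have [/andP[w0 w1] Fw] := homega i j.
have H1 : t \in `[0, 1]%R by rewrite in_itv /= t0 (le_trans (ltW tw) (ltW w1)).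
have H2 : omega i j \in `[0, 1]%R by rewrite in_itv /= (ltW w0) (ltW w1).
have H := @F_decr i j (omega i j) t H2 H1 tw.
by rewrite /= Fw in H.
Qed.

Lemma gg_decr i j y1 y2 : 0 < r j < omega i j -> 0 < y1 -> y1 < y2 -> gg i j y2 < gg i j y1.
Proof.
move=> /andP[r0 rw] y10 y12.
have y20 : 0 < y2 by apply: lt_trans y12.
have [/andP[w0 w1] _] := homega i j.
have A0 : 0 < F i j (r j) by apply: F_pos; rewrite ltW.
have B0 : derive1 (F i j) (r j) < 0.
  have hr : 0 < r j < 1 by rewrite r0 (lt_trans rw w1).
  by have [_ [h _]] := hFd i j (r j) hr; exact: h.
have [a0 a1] := andP (ha i).
have P1 : powR y2 (a i - 1) <= powR y1 (a i - 1).
  rewrite /powR !gt_eqF // ler_expR; apply: ler_wnM2l; first by rewrite subr_le0.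
  by rewrite ler_ln ?posrE // ltW.
have P2 : powR y1 (a i) < powR y2 (a i).
  by apply: gt0_ltr_powR => //; rewrite nnegrE ltW.
rewrite /gg; apply: ler_ltD.
  by rewrite -!mulrA ler_pM2l // ler_pM2r.
by rewrite ltr_nM2r.
Qed.

Lemma gg_inj i j y1 y2 : 0 < r j < omega i j -> 0 < y1 -> 0 < y2 -> gg i j y1 = gg i j y2 -> y1 = y2.
Proof.
move=> hr y10 y20 E; case: (ltgtP y1 y2) => // H.
  by have := @gg_decr i j _ _ hr y10 H; rewrite E ltxx.
by have := @gg_decr i j _ _ hr y20 H; rewrite E ltxx.
Qed.

Lemma gg_lt i j y1 y2 : 0 < r j < omega i j -> 0 < y1 -> 0 < y2 -> gg i j y1 < gg i j y2 -> y2 < y1.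
Proof.
move=> hr y10 y20 E; case: (ltgtP y1 y2) => // H.
  by have := @gg_decr i j _ _ hr y10 H; rewrite ltNge (ltW E).
by move: E; rewrite H ltxx.
Qed.


Local Notation V i z x := (Vutil a k Rr p i z x).
Local Notation GN x := (GNE a k Rr p omega x).

Lemma x_ge0 (x : 'M[R]_(n, m)) : in_Cn x -> forall i j, 0 <= x i j.
Proof. by move=> H i j; have [/(_ j) /andP[]] := H i. Qed.
Lemma x_le1 (x : 'M[R]_(n, m)) : in_Cn x -> forall i j, x i j <= 1.
Proof. by move=> H i j; have [/(_ j) /andP[]] := H i. Qed.
Lemma x_sum (x : 'M[R]_(n, m)) : in_Cn x -> forall i, \sum_(j < m) x i j <= 1.
Proof. by move=> H i; have [_] := H i. Qed.
Lemma xTm_ge0 (x : 'M[R]_(n, m)) : in_Cn x -> forall i j, 0 <= xTm x i j.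
Proof. by move=> H i j; apply: sumr_ge0 => l _; apply: x_ge0. Qed.
Lemma xT_split (x : 'M[R]_(n, m)) i j : xT x j = x i j + xTm x i j.
Proof. by rewrite /xT (bigD1 i) //=. Qed.

Arguments x_ge0 {x}. Arguments x_le1 {x}. Arguments x_sum {x}. Arguments xTm_ge0 {x}.

Lemma sum_ind (j : 'I_m) : \sum_(l < m) ((l == j)%:R : R) = 1.
Proof. by rewrite (bigD1 j) //= eqxx big1 ?addr0 // => l /negbTE ->. Qed.
Lemma sum_ind_mul (f : 'I_m -> R) (j : 'I_m) : \sum_(l < m) (l == j)%:R * f l = f j.
Proof. by rewrite (bigD1 j) //= eqxx mul1r big1 ?addr0 // => l /negbTE ->; rewrite mul0r. Qed.

Lemma theta_le i (x : 'M[R]_(n, m)) (Hx : GN x) (z : 'I_m -> R) :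
  (forall j, 0 <= z j <= x i j) -> in_theta omega i x z.
Proof.
move=> Hz; have [HC Hi] := Hx; have [[_ Hth] _] := Hi i.
split.
  split.
    move=> j; have /andP[z0 zx] := Hz j; rewrite z0 /=; apply: (le_trans zx).
    exact: x_le1.
  apply: (@le_trans _ _ (\sum_(j < m) x i j)); last exact: x_sum.
  by apply: ler_sum => j _; have /andP[] := Hz j.
move=> j; have [H1 H2] := Hth j; split.
  move=> /H1 /andP[_ h]; have /andP[z0 zx] := Hz j; by rewrite z0 (le_trans zx h).
move=> /H2 /= h; have /andP[z0 zx] := Hz j; apply/eqP; rewrite eq_le z0 andbT.
by rewrite -h.
Qed.

Lemma Vupd i (x : 'M[R]_(n, m)) (z : 'I_m -> R) j v :
  V i (fun j' => if j' == j then v else z j') x =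
  V i z x - powR (z j) (a i) * F i j (z j + xTm x i j) + powR v (a i) * F i j (v + xTm x i j).
Proof.
rewrite /Vutil (bigD1 j) //= eqxx [in RHS](bigD1 j) //=.
rewrite (eq_bigr (fun j' => powR (z j') (a i) * F i j' (z j' + xTm x i j'))) => [|j' /negbTE -> //].
ring.
Qed.

Lemma LC (x : 'M[R]_(n, m)) (Hx : GN x) (HT : forall j, xT x j = r j) i j :
  0 < x i j -> r j < omega i j.
Proof.
move=> xp; have [HC Hi] := Hx; have [[_ Hth] Hopt] := Hi i.
have [H1 H2] := Hth j.
have Hlt : xTm x i j < omega i j.
  have [//|/negP h] := boolP (xTm x i j < omega i j).
  by have /= h' := H2 h; move: xp; rewrite h' ltxx.
have /andP[_ hle] := H1 Hlt.
have xs := xT_split x i j; rewrite HT in xs.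
have tm0 := xTm_ge0 HC i j.
have rle : r j <= omega i j by lra.
rewrite lt_neqAle rle andbT; apply/negP => /eqP Ew.
have Hz : in_theta omega i x (fun j' => if j' == j then x i j / 2 else x i j').
  apply: theta_le => // j'; case: eqP => [->|_].
    apply/andP; split; lra.
  by rewrite lexx (x_ge0 HC).
have := Hopt _ Hz.
have E := Vupd i x (fun j => x i j) j (x i j / 2); rewrite /= in E; rewrite E.
have e1 : x i j + xTm x i j = omega i j by lra.
rewrite e1 (homega i j).2 mulr0 subr0.
have pos : 0 < powR (x i j / 2) (a i) * F i j (x i j / 2 + xTm x i j).
  apply: mulr_gt0; first by apply: powR_gt0; lra.
  apply: F_pos; apply/andP; split; lra.
lra.
Qed.
Arguments LC {x} Hx HT {i j}.


Lemma fermat i (x : 'M[R]_(n, m)) (Hx : GN x) (HT : forall j, xT x j = r j)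
  (d : 'I_m -> R) (eps : R) : 0 < eps ->
  (forall j, d j != 0 -> [/\ 0 < x i j, eps <= x i j, eps <= omega i j - r j & `|d j| <= 1]) ->
  (forall t, `|t| < eps -> \sum_(j < m) (x i j + t * d j) <= 1) ->
  \sum_(j < m) d j * gg i j (x i j) = 0.
Proof.
move=> e0 Hd Hs.
have [HC Hi] := Hx; have [[_ Hth] Hopt] := Hi i.
pose phi := fun t => \sum_(j < m) powR (x i j + t * d j) (a i) * F i j (x i j + t * d j + xTm x i j).
pose dphi := fun t => \sum_(j < m) d j * (powR (x i j + t * d j) (a i) * derive1 (F i j) (x i j + t * d j + xTm x i j) + F i j (x i j + t * d j + xTm x i j) * (a i * powR (x i j + t * d j) (a i - 1))).
have Htd t j : `|t| < eps -> d j != 0 -> - eps < t * d j < eps.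
  move=> ht dj; have [_ _ _ hd] := Hd j dj; rewrite -ltr_norml normrM.
  apply: le_lt_trans ht.
  by rewrite -{2}(mulr1 `|t|) ler_wpM2l.
have Hb t j : `|t| < eps -> d j != 0 ->
   [/\ 0 < x i j + t * d j, x i j + t * d j < omega i j - xTm x i j,
       0 < x i j + t * d j + xTm x i j & x i j + t * d j + xTm x i j < 1].
  move=> ht dj; have [xp ex ew _] := Hd j dj; have /andP[l1 l2] := Htd t j ht dj.
  have xs := xT_split x i j; rewrite HT in xs.
  have tm0 := xTm_ge0 HC i j.
  have [/andP[w0 w1] _] := homega i j.
  split; lra.
have Hz t : `|t| < eps -> in_theta omega i x (fun j => x i j + t * d j).
  move=> ht; split; [split|].
  - move=> j; have [dj|dj] := eqVneq (d j) 0.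
      rewrite dj mulr0 addr0; have [/(_ j)] := HC i; done.
    have [b1 b2 _ _] := Hb t j ht dj.
    have tm0 := xTm_ge0 HC i j.
    have [/andP[w0 w1] _] := homega i j.
    apply/andP; split; lra.
  - exact: Hs.
  - move=> j; have [dj|dj] := eqVneq (d j) 0.
      rewrite dj mulr0 addr0; exact: Hth j.
    have [b1 b2 _ _] := Hb t j ht dj.
    split.
      by move=> _; apply/andP; split; lra.
    move=> hn; exfalso; apply: hn; have tm0 := xTm_ge0 HC i j; lra.
have Hle t : `|t| < eps -> phi t <= phi 0.
  move=> ht; have := Hopt _ (Hz t ht).
  have -> : phi 0 = V i (fun j => x i j) x.
    by rewrite /phi /Vutil; apply: eq_bigr => j _; rewrite mul0r addr0.
  done.
have Hder (t : R) : `|t| < eps -> is_derive t 1 phi (dphi t).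
  move=> ht.
  have -> : phi = \sum_(j < m) (fun t => powR (x i j + t * d j) (a i) * F i j (x i j + t * d j + xTm x i j)).
    by apply/funext => s; rewrite fct_sumE.
  rewrite /dphi; apply: is_derive_sum => j.
  have [dj|dj] := eqVneq (d j) 0.
    rewrite dj mul0r.
    have -> : (fun t0 : R => powR (x i j + t0 * 0) (a i) * F i j (x i j + t0 * 0 + xTm x i j)) = cst (powR (x i j) (a i) * F i j (x i j + xTm x i j)).
      by apply/funext => s; rewrite mulr0 addr0.
    exact: is_derive_cst.
  have [y0 _ hy1 hy2] := Hb t j ht dj.
  have hy : 0 < x i j + t * d j + xTm x i j < 1 by rewrite hy1 hy2.
  have [hdF _] := hFd i j (x i j + t * d j + xTm x i j) hy.
  have hF : is_derive (x i j + t * d j + xTm x i j) 1 (F i j) (derive1 (F i j) (x i j + t * d j + xTm x i j)).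
    by rewrite derive1E; exact: derivableP.
  have ho := @outer_der R (F i j) (a i) (xTm x i j) (x i j + t * d j) _ y0 hF.
  have hi := @inner_der R (x i j) (d j) t.
  have := @is_derive1_comp R (fun s => powR s (a i) * F i j (s + xTm x i j)) (fun s => x i j + s * d j) t _ _ ho hi.
  by rewrite mulrC.
have H0 : is_derive (0 : R) (1 : R) phi 0.
  apply: (@derive1_at_max R phi (- eps) eps 0).
  - lra.
  - move=> t; rewrite in_itv /= -ltr_norml => ht; by have [] := Hder t ht.
  - by rewrite in_itv /= oppr_lt0 e0.
  - move=> t; rewrite in_itv /= -ltr_norml => ht; exact: Hle.
have h0 : `|0 : R| < eps by rewrite normr0.
have := @derive_val _ _ _ _ _ _ _ (Hder 0 h0).
rewrite (@derive_val _ _ _ _ _ _ _ H0) => E.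
rewrite [RHS]E /dphi; apply: eq_bigr => j _.
rewrite mul0r addr0 -(xT_split x i j) HT /gg; ring.
Qed.

Lemma LD i (x : 'M[R]_(n, m)) (Hx : GN x) (HT : forall j, xT x j = r j) j :
  0 < x i j -> \sum_(l < m) x i l < 1 -> gg i j (x i j) = 0.
Proof.
move=> xp hs.
have rw := LC Hx HT xp.
have [e e0 [e1 e2]] := @ex_eps2 R (x i j) (omega i j - r j) xp ltac:(by rewrite subr_gt0).
have [e' e'0 [e'1 e'2]] := @ex_eps2 R e (1 - \sum_(l < m) x i l) e0 ltac:(by rewrite subr_gt0).
have Hd : forall l, (l == j)%:R != 0 :> R -> [/\ 0 < x i l, e' <= x i l, e' <= omega i l - r l & `|(l == j)%:R : R| <= 1].
  move=> l; have [->|nj] := eqVneq l j.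
    move=> _; rewrite normr1; split => //; apply: (le_trans e'1) => //.
  by rewrite ?(negbTE nj) /= ?eqxx.
have Hs : forall t, `|t| < e' -> \sum_(l < m) (x i l + t * (l == j)%:R) <= 1.
  move=> t ht; rewrite big_split /= -mulr_sumr sum_ind mulr1.
  have := ler_norm t; lra.
have := @fermat i x Hx HT (fun l => (l == j)%:R) e' e'0 Hd Hs.
by rewrite sum_ind_mul.
Qed.
Arguments LD {i x} Hx HT {j}.


Lemma LE i (x : 'M[R]_(n, m)) (Hx : GN x) (HT : forall j, xT x j = r j) j j' :
  j != j' -> 0 < x i j -> 0 < x i j' -> gg i j (x i j) = gg i j' (x i j').
Proof.
move=> jj xp xp'.
have rw := LC Hx HT xp; have rw' := LC Hx HT xp'.
have [e1 e10 [e11 e12]] := @ex_eps2 R (x i j) (omega i j - r j) xp ltac:(by rewrite subr_gt0).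
have [e2 e20 [e21 e22]] := @ex_eps2 R (x i j') (omega i j' - r j') xp' ltac:(by rewrite subr_gt0).
have [e e0 [ee1 ee2]] := @ex_eps2 R e1 e2 e10 e20.
have Hd : forall l, (l == j)%:R - (l == j')%:R != 0 :> R ->
   [/\ 0 < x i l, e <= x i l, e <= omega i l - r l & `|(l == j)%:R - (l == j')%:R : R| <= 1].
  move=> l; have [->|nj] := eqVneq l j.
    rewrite ?eqxx (negbTE jj) subr0 => _; rewrite normr1; split => //.
      exact: (le_trans ee1).
    exact: (le_trans ee1).
  have [->|nj'] := eqVneq l j'.
    rewrite /= ?sub0r => _; rewrite normrN normr1; split => //.
      exact: (le_trans ee2).
    exact: (le_trans ee2).
  by rewrite ?(negbTE nj) ?(negbTE nj') /= ?subrr ?eqxx.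
have Hs : forall t, `|t| < e -> \sum_(l < m) (x i l + t * ((l == j)%:R - (l == j')%:R)) <= 1.
  move=> t ht; rewrite big_split /= -mulr_sumr sumrB !sum_ind subrr mulr0 addr0.
  by have [HC _] := Hx; exact: x_sum.
have := @fermat i x Hx HT (fun l => (l == j)%:R - (l == j')%:R) e e0 Hd Hs.
move=> E; apply/eqP; rewrite -subr_eq0 -E; apply/eqP.
under [RHS]eq_bigr => l _ do rewrite mulrBl.
by rewrite sumrB !sum_ind_mul.
Qed.
Arguments LE {i x} Hx HT {j j'}.


Lemma r_pos (x : 'M[R]_(n, m)) (Hx : GN x) (HT : forall j, xT x j = r j) i j :
  0 < x i j -> 0 < r j < omega i j.
Proof.
move=> xp; rewrite (LC Hx HT xp) andbT.
have [HC _] := Hx; have xs := xT_split x i j; rewrite HT in xs.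
have := xTm_ge0 HC i j; lra.
Qed.
Arguments r_pos {x} Hx HT {i j}.


Lemma uniq_nosum i (x y : 'M[R]_(n, m)) (Hx : GN x) (HTx : forall j, xT x j = r j)
  (Hy : GN y) (HTy : forall j, xT y j = r j)
  (Hpat : forall j, (0 < x i j) = (0 < y i j))
  (sx : \sum_(l < m) x i l < 1) (sy : \sum_(l < m) y i l < 1) j : x i j = y i j.
Proof.
have [HCx _] := Hx; have [HCy _] := Hy.
case: (boolP (0 < x i j)) => xp.
  have yp : 0 < y i j by rewrite -Hpat.
  apply: (@gg_inj i j) => //; first exact: (r_pos Hx HTx xp).
  by rewrite (LD Hx HTx xp sx) (LD Hy HTy yp sy).
have yp : ~~ (0 < y i j) by rewrite -Hpat.
have := x_ge0 HCx i j; have := x_ge0 HCy i j.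
move: xp yp; rewrite -!leNgt => xp yp.
lra.
Qed.
Arguments uniq_nosum {i x y}.


Lemma uniq_sum_aux i (x y : 'M[R]_(n, m)) (Hx : GN x) (HTx : forall j, xT x j = r j)
  (Hy : GN y) (HTy : forall j, xT y j = r j)
  (Hpat : forall j, (0 < x i j) = (0 < y i j))
  (sx : \sum_(l < m) x i l = 1) (sy : \sum_(l < m) y i l = 1) j0 : x i j0 < y i j0 -> False.
Proof.
move=> lt0.
have [HCx _] := Hx; have [HCy _] := Hy.
have y0p : 0 < y i j0 by apply: le_lt_trans lt0; exact: x_ge0.
have x0p : 0 < x i j0 by rewrite Hpat.
have hr0 := r_pos Hx HTx x0p.
have gl : gg i j0 (y i j0) < gg i j0 (x i j0) by exact: gg_decr.
have Hle : forall j, x i j <= y i j.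
  move=> j; case: (boolP (0 < x i j)) => xp.
    have yp : 0 < y i j by rewrite -Hpat.
    have [->|nj] := eqVneq j j0; first exact: ltW.
    apply: ltW; apply: (@gg_lt i j) => //; first exact: (r_pos Hx HTx xp).
    by rewrite (LE Hx HTx nj xp x0p) (LE Hy HTy nj yp y0p).
  have := x_ge0 HCy i j; move: xp; rewrite -leNgt => xp; lra.
have : \sum_(l < m) x i l < \sum_(l < m) y i l.
  rewrite (bigD1 j0) //= [X in _ < X](bigD1 j0) //=.
  by apply: ltr_leD => //; apply: ler_sum => l _.
by rewrite sx sy ltxx.
Qed.
Arguments uniq_sum_aux {i x y}.


Lemma uniq_row i (x y : 'M[R]_(n, m)) (Hx : GN x) (HTx : forall j, xT x j = r j)
  (Hy : GN y) (HTy : forall j, xT y j = r j)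
  (Hpat : forall j, (0 < x i j) = (0 < y i j))
  (Hs : (\sum_(l < m) x i l == 1) = (\sum_(l < m) y i l == 1)) j : x i j = y i j.
Proof.
have [HCx _] := Hx; have [HCy _] := Hy.
case: (boolP (\sum_(l < m) x i l == 1)) => sx.
  have sy := sx; rewrite Hs in sy.
  move/eqP: sx => sx; move/eqP: sy => sy.
  case: (ltgtP (x i j) (y i j)) => // H.
    by case: (uniq_sum_aux Hx HTx Hy HTy Hpat sx sy j H).
  have Hpat' : forall j, (0 < y i j) = (0 < x i j) by move=> l; rewrite Hpat.
  by case: (uniq_sum_aux Hy HTy Hx HTx Hpat' sy sx j H).
have sy := sx; rewrite Hs in sy.
apply: (uniq_nosum Hx HTx Hy HTy Hpat).
  by rewrite lt_neqAle sx x_sum.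
by rewrite lt_neqAle sy x_sum.
Qed.

Lemma count_gne (s : seq 'M[R]_(n, m)) (hs : uniq s)
  (hsW : forall x, x \in s -> GN x /\ in_Cn x /\ (forall j, xT x j = r j)) :
  (size s <= 2 ^ (n * m.+1))%N.
Proof.
pose pat (x : 'M[R]_(n, m)) : {ffun 'I_n -> {ffun 'I_m -> bool} * bool} :=
  [ffun i => ([ffun j => 0 < x i j], \sum_(l < m) x i l == 1)].
have inj : {in s &, injective pat}.
  move=> x y xs ys E; apply/matrixP => i j.
  have [Hx [_ HTx]] := hsW x xs; have [Hy [_ HTy]] := hsW y ys.
  have E1 := congr1 (fun f : {ffun 'I_n -> {ffun 'I_m -> bool} * bool} => f i) E; rewrite /= !ffunE in E1.
  case: E1 => E1 E2.
  apply: (@uniq_row i x y Hx HTx Hy HTy) => // l.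
  by have := congr1 (fun f : {ffun 'I_m -> bool} => f l) E1; rewrite !ffunE.
rewrite -(size_map pat).
have -> : (2 ^ (n * m.+1) = #|{ffun 'I_n -> {ffun 'I_m -> bool} * bool}|)%N.
  by rewrite card_ffun card_prod card_ffun !card_bool !card_ord mulnC expnM expnSr.
rewrite cardE; apply: uniq_leq_size; first by rewrite map_inj_in_uniq.
by move=> y _; rewrite mem_enum.
Qed.

End Main.

Theorem theorem10 (R : realType) (n m : nat) (hn : (0 < n)%N) (hm : (0 < m)%N)
  (a k : 'I_n -> R) (Rr p : 'I_m -> R -> R) (omega : 'I_n -> 'I_m -> R)
  (hR : forall j (t : R), 0 <= t -> 1 < Rr j t)
  (hp01 : forall j (t : R), 0 <= t -> 0 <= p j t <= 1)
  (hp0 : forall j, p j 0 = 0)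
  (hp1 : forall j (t : R), 1 <= t -> p j t = 1)
  (ha : forall i, 0 < a i <= 1)
  (hk : forall i, 0 < k i)
  (hFc : forall i j, {within `[0, 1], continuous (Ffun (a i) (k i) (Rr j) (p j))}%classic)
  (hFd : forall i j (t : R), 0 < t < 1 ->
     derivable (Ffun (a i) (k i) (Rr j) (p j)) t 1 /\
     derive1 (Ffun (a i) (k i) (Rr j) (p j)) t < 0 /\
     derivable (derive1 (Ffun (a i) (k i) (Rr j) (p j))) t 1 /\
     derive1 (derive1 (Ffun (a i) (k i) (Rr j) (p j))) t < 0)
  (homega : forall i j, 0 < omega i j < 1 /\
     Ffun (a i) (k i) (Rr j) (p j) (omega i j) = 0)
  (r : 'I_m -> R) (hr : forall j, 0 <= r j <= 1)
  (s : seq 'M[R]_(n, m)) (hs : uniq s)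
  (hsW : forall x, x \in s ->
     GNE a k Rr p omega x /\ in_Cn x /\ (forall j, xT x j = r j)) :
  (size s <= 2 ^ (n * m.+1))%N.
Proof.
exact: (@count_gne R n m a k Rr p omega ha hFc hFd homega r s hs hsW).
Qed.
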